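(* The set of lower accumulation points for $2$ runners is exactly $\mathcal{S}(1)=\{1/2\}$, and there are no upper accumulation points for $2$ runners.
   Context: For a real number $x$, $\Vert x\Vert$ denotes the distance from $x$ to the nearest integer. For positive integers $v_1,\ldots,v_n$, $\mathrm{ML}(v_1,\ldots,v_n)=\max_{t\in\mathbb{R}}\min_{1\le i\le n}\Vert t v_i\Vert$. Let $\mathcal{S}(n)=\{\mathrm{ML}(v_1,\ldots,v_n): v_1,\ldots,v_n \text{ positive integers}\}$. A real number $A$ is a lower accumulation point for $n$ runners if $\mathcal{S}(n)$ contains a sequence of elements strictly less than $A$ converging to $A$; it is an upper accumulation point for $n$ runners if $\mathcal{S}(n)$ contains a sequence of elements strictly greater than $A$ converging to $A$. *)

(* Defs.v *)
From Stdlib Require Import Reals Lra Lia.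
Open Scope R_scope.

(* ||x|| : distance from x to the nearest integer *)
Definition dist_int (x : R) : R := Rmin (frac_part x) (1 - frac_part x).

Definition min_at (n : nat) (v : nat -> nat) (t m : R) : Prop :=
  (exists i, (i < n)%nat /\ dist_int (t * INR (v i)) = m) /\
  (forall i, (i < n)%nat -> m <= dist_int (t * INR (v i))).

Definition is_ML (n : nat) (v : nat -> nat) (m : R) : Prop :=
  (exists t, min_at n v t m) /\
  (forall t m', min_at n v t m' -> m' <= m).

Definition S_set (n : nat) (x : R) : Prop :=
  exists v : nat -> nat, (forall i, (i < n)%nat -> (0 < v i)%nat) /\ is_ML n v x.

Definition lower_acc (n : nat) (A : R) : Prop :=
  exists u : nat -> R, (forall k, S_set n (u k) /\ u k < A) /\ Un_cv u A.

Definition upper_acc (n : nat) (A : R) : Prop :=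
  exists u : nat -> R, (forall k, S_set n (u k) /\ A < u k) /\ Un_cv u A.

(* Main.v *)
Require Import Defs.
From Stdlib Require Import Reals Lra Lia ZArith Znumtheory.
Open Scope R_scope.

Lemma fp_eq x : x = IZR (Int_part x) + frac_part x.
Proof. unfold frac_part; ring. Qed.

Lemma dist_bounds x : 0 <= dist_int x <= 1/2.
Proof.
  destruct (base_fp x). unfold dist_int, Rmin; destruct Rle_dec; lra.
Qed.

Lemma dist_ex x : exists z, dist_int x = Rabs (x - IZR z).
Proof.
  destruct (base_fp x). pose proof (fp_eq x).
  unfold dist_int, Rmin; destruct Rle_dec.
  - exists (Int_part x). rewrite Rabs_pos_eq; lra.
  - exists (Int_part x + 1)%Z. rewrite plus_IZR. rewrite Rabs_left1; lra.
Qed.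

Lemma dist_le x z : dist_int x <= Rabs (x - IZR z).
Proof.
  destruct (base_fp x). pose proof (fp_eq x).
  set (n := Int_part x) in *.
  assert (E : x - IZR z = frac_part x + IZR (n - z)) by (rewrite minus_IZR; lra).
  rewrite E.
  destruct (Z.lt_total (n - z) 0) as [Hm|[Hm|Hm]].
  - destruct (Z.eq_dec (n - z) (-1)) as [He|He].
    + rewrite He. unfold Rabs; destruct Rcase_abs; unfold dist_int, Rmin; destruct Rle_dec; lra.
    + assert (IZR (n - z) <= -2) by (apply IZR_le; lia).
      unfold Rabs; destruct Rcase_abs; unfold dist_int, Rmin; destruct Rle_dec; lra.
  - rewrite Hm. unfold Rabs; destruct Rcase_abs; unfold dist_int, Rmin; destruct Rle_dec; lra.
  - assert (IZR (n - z) >= 1) by (apply Rle_ge, IZR_le; lia).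
    unfold Rabs; destruct Rcase_abs; unfold dist_int, Rmin; destruct Rle_dec; lra.
Qed.

Lemma int_cases (w : Z) : IZR w <= 0 \/ 1 <= IZR w.
Proof.
  destruct (Z.le_gt_cases w 0).
  - left; apply IZR_le; lia.
  - right; apply IZR_le; lia.
Qed.

Lemma dist_plus y n : 0 <= y <= 1/2 -> dist_int (y + IZR n) = y.
Proof.
  intros Hy. apply Rle_antisym.
  - pose proof (dist_le (y + IZR n) n). rewrite Rabs_pos_eq in H; lra.
  - destruct (dist_ex (y + IZR n)) as [z Hz]. rewrite Hz.
    replace (y + IZR n - IZR z) with (y - IZR (z - n)) by (rewrite minus_IZR; ring).
    destruct (int_cases (z - n)); unfold Rabs; destruct Rcase_abs; lra.
Qed.

Lemma dist_minus y n : 0 <= y <= 1/2 -> dist_int (IZR n - y) = y.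
Proof.
  intros Hy. apply Rle_antisym.
  - pose proof (dist_le (IZR n - y) n). rewrite Rabs_left1 in H; lra.
  - destruct (dist_ex (IZR n - y)) as [z Hz]. rewrite Hz.
    replace (IZR n - y - IZR z) with (IZR (n - z) - y) by (rewrite minus_IZR; ring).
    destruct (int_cases (n - z)); unfold Rabs; destruct Rcase_abs; lra.
Qed.

Lemma div_lt_mul x y s : 0 < s -> x / s < y -> x < y * s.
Proof.
  intros Hs H. apply Rmult_lt_compat_r with (r := s) in H; auto.
  unfold Rdiv in H. rewrite Rmult_assoc, Rinv_l in H; lra.
Qed.

Lemma dist_gt_frac x c : c < dist_int x -> c < frac_part x /\ c < 1 - frac_part x.
Proof. unfold dist_int, Rmin; destruct Rle_dec; lra. Qed.

Lemma ub_odd (T : R) (a b k : Z) : (0 < a)%Z -> (0 < b)%Z -> (a + b = 2*k+1)%Z ->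
  IZR k / IZR (a+b) < dist_int (T * IZR a) ->
  IZR k / IZR (a+b) < dist_int (T * IZR b) -> False.
Proof.
  intros Ha Hb Hs H1 H2.
  assert (Hsp : 0 < IZR (a+b)) by (apply IZR_lt; lia).
  apply dist_gt_frac in H1; apply dist_gt_frac in H2.
  destruct H1 as [H1a H1b]; destruct H2 as [H2a H2b].
  apply div_lt_mul in H1a; auto. apply div_lt_mul in H2a; auto.
  assert (H1c : IZR k / IZR (a+b) < 1 - frac_part (T * IZR a)) by lra.
  assert (H2c : IZR k / IZR (a+b) < 1 - frac_part (T * IZR b)) by lra.
  apply div_lt_mul in H1c; auto. apply div_lt_mul in H2c; auto.
  clear H1b H2b.
  pose proof (fp_eq (T * IZR a)) as E1. pose proof (fp_eq (T * IZR b)) as E2.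
  set (f1 := frac_part (T * IZR a)) in *. set (f2 := frac_part (T * IZR b)) in *.
  set (n1 := Int_part (T * IZR a)) in *. set (n2 := Int_part (T * IZR b)) in *.
  set (m := (a * n2 - b * n1)%Z).
  assert (Em : IZR b * f1 - IZR a * f2 = IZR m).
  { unfold m. rewrite minus_IZR, !mult_IZR.
    assert (IZR b * (T * IZR a) = IZR a * (T * IZR b)) by ring. nra. }
  set (s := IZR (a+b)) in *.
  assert (Es : s = IZR a + IZR b) by (unfold s; rewrite plus_IZR; ring).
  assert (Esk : s = 2 * IZR k + 1) by (unfold s; rewrite Hs, plus_IZR, mult_IZR; simpl; ring).
  assert (Ha' : 0 < IZR a) by (apply IZR_lt; lia).
  assert (Hb' : 0 < IZR b) by (apply IZR_lt; lia).
  assert (L1 : IZR b * IZR k < IZR b * (f1 * s)) by (apply Rmult_lt_compat_l; lra).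
  assert (L2 : IZR a * (f2 * s) < IZR a * (IZR k + 1)).
  { apply Rmult_lt_compat_l; auto. lra. }
  assert (L3 : IZR b * (f1 * s) < IZR b * (IZR k + 1)) by (apply Rmult_lt_compat_l; lra).
  assert (L4 : IZR a * IZR k < IZR a * (f2 * s)) by (apply Rmult_lt_compat_l; lra).
  assert (M : IZR m * s = IZR b * (f1 * s) - IZR a * (f2 * s)) by (rewrite <- Em; ring).
  assert (Lo : IZR (k - a) * s < IZR m * s).
  { rewrite minus_IZR. rewrite M. rewrite Esk at 1. nra. }
  assert (Hi : IZR m * s < IZR (k - a + 1) * s).
  { rewrite plus_IZR, minus_IZR. rewrite M. rewrite Esk at 1. nra. }
  apply Rmult_lt_reg_r in Lo; auto. apply Rmult_lt_reg_r in Hi; auto.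
  apply lt_IZR in Lo. apply lt_IZR in Hi. lia.
Qed.

Lemma core (v : nat -> nat) (a b d p q k : Z) : (0<a)%Z -> (0<b)%Z -> (0<d)%Z ->
  (p*a+q*b = 1)%Z -> INR (v 0%nat) = IZR (a*d) -> INR (v 1%nat) = IZR (b*d) ->
  (a+b = 2*k \/ a+b = 2*k+1)%Z -> is_ML 2 v (IZR k / IZR (a+b)).
Proof.
  intros Ha Hb Hd Hpq Hv0 Hv1 Hk.
  assert (Hk1 : (1 <= k)%Z) by lia.
  assert (Hsp : 0 < IZR (a+b)) by (apply IZR_lt; lia).
  assert (Hdp : 0 < IZR d) by (apply IZR_lt; lia).
  assert (Hm : 0 <= IZR k / IZR (a+b) <= 1/2).
  { assert (0 <= IZR k) by (apply IZR_le; lia).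
    assert (2 * IZR k <= IZR (a+b)) by (rewrite <- mult_IZR; apply IZR_le; lia).
    split. unfold Rdiv; apply Rmult_le_pos; [lra| left; apply Rinv_0_lt_compat; lra].
    apply (Rmult_le_reg_r (IZR (a+b))); auto. field_simplify; lra. }
  set (m := IZR k / IZR (a+b)) in *.
  split.
  - set (t := IZR ((p-q)*k) / IZR ((a+b)*d)).
    assert (E1 : t * INR (v 0%nat) = m + IZR (- (k*q))).
    { rewrite Hv0. unfold t, m.
      assert (Z1 : IZR (p-q) * IZR a = 1 - IZR q * IZR (a+b)).
      { rewrite <- !mult_IZR, <- minus_IZR. apply f_equal. nia. }
      rewrite !mult_IZR, opp_IZR, mult_IZR.
      replace (IZR (p - q) * IZR k / (IZR (a + b) * IZR d) * (IZR a * IZR d))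
        with (IZR (p - q) * IZR a * IZR k / IZR (a + b)) by (field; lra).
      rewrite Z1. field. lra. }
    assert (E2 : t * INR (v 1%nat) = IZR (k*p) - m).
    { rewrite Hv1. unfold t, m.
      assert (Z1 : IZR (p-q) * IZR b = IZR p * IZR (a+b) - 1).
      { rewrite <- !mult_IZR, <- minus_IZR. apply f_equal. nia. }
      rewrite !mult_IZR.
      replace (IZR (p - q) * IZR k / (IZR (a + b) * IZR d) * (IZR b * IZR d))
        with (IZR (p - q) * IZR b * IZR k / IZR (a + b)) by (field; lra).
      rewrite Z1. field. lra. }
    assert (D1 : dist_int (t * INR (v 0%nat)) = m) by (rewrite E1; apply dist_plus; auto).
    assert (D2 : dist_int (t * INR (v 1%nat)) = m) by (rewrite E2; apply dist_minus; auto).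
    exists t. split.
    + exists 0%nat. split; [lia | auto].
    + intros i Hi. destruct i as [|[|i]]; try lia; lra.
  - intros t m' [[i [Hi Heq]] Hall].
    destruct Hk as [Hk|Hk].
    + assert (m = 1/2).
      { unfold m. rewrite Hk, mult_IZR. field. assert (0 < IZR k) by (apply IZR_lt; lia). lra. }
      pose proof (dist_bounds (t * INR (v i))). lra.
    + destruct (Rle_lt_dec m' m) as [|Hlt]; auto. exfalso.
      pose proof (Hall 0%nat ltac:(lia)) as A0. pose proof (Hall 1%nat ltac:(lia)) as A1.
      rewrite Hv0, mult_IZR in A0. rewrite Hv1, mult_IZR in A1.
      apply (ub_odd (t * IZR d) a b k); auto.
      * replace (t * IZR d * IZR a) with (t * (IZR a * IZR d)) by ring. fold m; lra.
      * replace (t * IZR d * IZR b) with (t * (IZR b * IZR d)) by ring. fold m; lra.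
Qed.

Definition fj (j : nat) : R := INR j / (2 * INR j + 1).

Lemma fj_bounds j : 0 <= fj j <= 1/2.
Proof.
  unfold fj. pose proof (pos_INR j). split.
  - unfold Rdiv; apply Rmult_le_pos; [lra | left; apply Rinv_0_lt_compat; lra].
  - apply (Rmult_le_reg_r (2 * INR j + 1)); [lra|]. field_simplify; lra.
Qed.

Lemma ML_unique n v x y : is_ML n v x -> is_ML n v y -> x = y.
Proof.
  intros [[t1 H1] U1] [[t2 H2] U2].
  apply Rle_antisym; [apply (U2 t1) | apply (U1 t2)]; auto.
Qed.

Lemma S2_mem x : S_set 2 x -> x = 1/2 \/ exists j, x = fj j.
Proof.
  intros [v [Hpos HML]].
  set (A0 := Z.of_nat (v 0%nat)). set (B0 := Z.of_nat (v 1%nat)).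
  assert (HA0 : (0 < A0)%Z) by (unfold A0; pose proof (Hpos 0%nat ltac:(lia)); lia).
  assert (HB0 : (0 < B0)%Z) by (unfold B0; pose proof (Hpos 1%nat ltac:(lia)); lia).
  set (d := Z.gcd A0 B0).
  destruct (Zis_gcd_bezout _ _ _ (Zgcd_is_gcd A0 B0)) as [p q Hpq].
  destruct (Z.gcd_divide_l A0 B0) as [a Ha]. destruct (Z.gcd_divide_r A0 B0) as [b Hb].
  fold d in Hpq, Ha, Hb.
  assert (Hd0 : (0 <= d)%Z) by apply Z.gcd_nonneg.
  assert (Hd : (0 < d)%Z) by (destruct (Z.eq_dec d 0); [subst; lia | lia]).
  assert (Hap : (0 < a)%Z) by nia. assert (Hbp : (0 < b)%Z) by nia.
  assert (Hpq' : (p*a + q*b = 1)%Z) by nia.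
  set (k := ((a+b)/2)%Z).
  assert (Hk : (a+b = 2*k \/ a+b = 2*k+1)%Z).
  { pose proof (Z.div_mod (a+b) 2 ltac:(lia)). pose proof (Z.mod_pos_bound (a+b) 2 ltac:(lia)).
    unfold k; lia. }
  assert (Hv0 : INR (v 0%nat) = IZR (a*d)) by (rewrite INR_IZR_INZ; fold A0; rewrite Ha; auto).
  assert (Hv1 : INR (v 1%nat) = IZR (b*d)) by (rewrite INR_IZR_INZ; fold B0; rewrite Hb; auto).
  pose proof (core v a b d p q k Hap Hbp Hd Hpq' Hv0 Hv1 Hk) as HC.
  rewrite (ML_unique _ _ _ _ HML HC).
  assert (Hk1 : (1 <= k)%Z) by lia.
  assert (0 < IZR k) by (apply IZR_lt; lia).
  destruct Hk as [Hk|Hk].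
  - left. rewrite Hk, mult_IZR. field. lra.
  - right. exists (Z.to_nat k). unfold fj. rewrite INR_IZR_INZ, Z2Nat.id by lia.
    rewrite Hk, plus_IZR, mult_IZR. reflexivity.
Qed.

Lemma S2_fj j : (1 <= j)%nat -> S_set 2 (fj j).
Proof.
  intros Hj.
  set (v := fun i : nat => match i with 0%nat => 1%nat | _ => (2*j)%nat end).
  exists v. split.
  - intros i Hi. destruct i; simpl; lia.
  - replace (fj j) with (IZR (Z.of_nat j) / IZR (1 + Z.of_nat (2*j))).
    + apply (core v 1 (Z.of_nat (2*j)) 1 1 0 (Z.of_nat j)); try lia.
      * simpl. reflexivity.
      * unfold v. rewrite INR_IZR_INZ. f_equal. lia.
    + unfold fj. rewrite plus_IZR, <- !INR_IZR_INZ, mult_INR. simpl. f_equal. ring.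
Qed.

Lemma S1_iff x : S_set 1 x <-> x = 1/2.
Proof.
  split.
  - intros [v [Hpos [[t0 [[i [Hi Hx]] _]] U]]].
    assert (Hv : 0 < INR (v 0%nat)) by (apply lt_0_INR; apply Hpos; lia).
    apply Rle_antisym.
    + rewrite <- Hx. apply dist_bounds.
    + apply (U (1 / (2 * INR (v 0%nat)))).
      assert (E : dist_int (1 / (2 * INR (v 0%nat)) * INR (v 0%nat)) = 1/2).
      { replace (1 / (2 * INR (v 0%nat)) * INR (v 0%nat)) with (1/2 + IZR 0) by (simpl; field; lra).
        apply dist_plus; lra. }
      split.
      * exists 0%nat. split; auto.
      * intros i' Hi'. replace i' with 0%nat by lia. lra.
  - intros ->. exists (fun _ => 1%nat). split; [intros; lia|]. split.
    + exists (1/2). assert (E : dist_int (1/2 * INR 1) = 1/2).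
      { replace (1/2 * INR 1) with (1/2 + IZR 0) by (simpl; field). apply dist_plus; lra. }
      split.
      * exists 0%nat. split; auto.
      * intros; lra.
    + intros t m' [[i [Hi Hx]] _]. rewrite <- Hx. apply dist_bounds.
Qed.

Lemma fj_sep j j' J : j <> j' -> INR j <= J -> INR j' <= J ->
  1 / ((2*J+1)*(2*J+1)) <= Rabs (fj j - fj j').
Proof.
  intros Hne H1 H2. pose proof (pos_INR j). pose proof (pos_INR j').
  assert (Hxy : 1 <= Rabs (INR j - INR j')).
  { destruct (Nat.lt_total j j') as [Hl|[Hl|Hl]]; [|lia|].
    - assert (INR (S j) <= INR j') by (apply le_INR; lia). rewrite S_INR in H3.
      rewrite Rabs_left1; lra.
    - assert (INR (S j') <= INR j) by (apply le_INR; lia). rewrite S_INR in H3.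
      rewrite Rabs_pos_eq; lra. }
  unfold fj. set (x := INR j) in *. set (y := INR j') in *.
  replace (x / (2 * x + 1) - y / (2 * y + 1)) with ((x - y) / ((2*x+1)*(2*y+1))) by (field; lra).
  assert (HP : 0 < (2*x+1)*(2*y+1)) by nra.
  unfold Rdiv; rewrite Rabs_mult, Rabs_inv, (Rabs_pos_eq ((2*x+1)*(2*y+1))) by lra; fold (Rdiv (Rabs (x-y)) ((2*x+1)*(2*y+1))).
  apply Rle_trans with (1 / ((2*x+1)*(2*y+1))).
  - unfold Rdiv. rewrite !Rmult_1_l. apply Rinv_le_contravar; auto. nra.
  - unfold Rdiv. apply Rmult_le_compat_r; auto. left; apply Rinv_0_lt_compat; auto.
Qed.

Lemma discrete (u : nat -> R) A B N0 : Un_cv u A -> B < 1/2 ->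
  (forall n, (n >= N0)%nat -> exists j, u n = fj j /\ fj j <= B) -> exists N, u N = A.
Proof.
  intros Hcv HB H.
  destruct (H N0 ltac:(lia)) as [j0 [_ Hj0]]. pose proof (fj_bounds j0).
  set (J := B / (1 - 2*B)).
  assert (HJ : forall j, fj j <= B -> INR j <= J).
  { intros j Hj. unfold fj in Hj. pose proof (pos_INR j). unfold J.
    apply (Rmult_le_reg_r (1 - 2*B)); [lra|].
    replace (B / (1 - 2 * B) * (1 - 2 * B)) with B by (field; lra).
    apply (Rmult_le_compat_r (2 * INR j + 1)) in Hj; [|lra].
    replace (INR j / (2 * INR j + 1) * (2 * INR j + 1)) with (INR j) in Hj by (field; lra).
    nra. }
  assert (HJ0 : 0 <= J) by (apply Rle_trans with (INR j0); [apply pos_INR | apply HJ; auto]).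
  set (eps := 1 / ((2*J+1)*(2*J+1))).
  assert (Heps : 0 < eps).
  { unfold eps, Rdiv. rewrite Rmult_1_l. apply Rinv_0_lt_compat. nra. }
  destruct (Hcv (eps/2) ltac:(lra)) as [N1 HN1].
  set (N := Nat.max N0 N1).
  assert (Hconst : forall n, (n >= N)%nat -> u n = u N).
  { intros n Hn.
    destruct (H n ltac:(lia)) as [jn [En Bn]]. destruct (H N ltac:(lia)) as [jN [EN BN]].
    destruct (Nat.eq_dec jn jN) as [->|Hne]; [congruence|].
    exfalso. pose proof (fj_sep jn jN J Hne (HJ _ Bn) (HJ _ BN)). fold eps in H1.
    pose proof (HN1 n ltac:(lia)). pose proof (HN1 N ltac:(lia)). unfold Rdist in *.
    rewrite <- En, <- EN in H1.
    unfold Rabs in *; repeat destruct Rcase_abs; lra. }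
  exists N. destruct (Req_dec (u N) A) as [|Hne]; auto. exfalso.
  assert (Hd : 0 < Rabs (u N - A)) by (apply Rabs_pos_lt; lra).
  destruct (Hcv _ Hd) as [N2 HN2].
  pose proof (HN2 (Nat.max N N2) ltac:(lia)). unfold Rdist in H1.
  rewrite (Hconst (Nat.max N N2) ltac:(lia)) in H1. lra.
Qed.

Lemma S2_le x : S_set 2 x -> x <= 1/2.
Proof. intros H. destruct (S2_mem x H) as [->|[j ->]]; [lra | apply fj_bounds]. Qed.

Lemma lower_iff A : lower_acc 2 A <-> A = 1/2.
Proof.
  split.
  - intros [u [Hu Hcv]].
    destruct (Rtotal_order A (1/2)) as [Hl|[He|Hg]]; auto; exfalso.
    + destruct (discrete u A A 0 Hcv Hl) as [N HN].
      * intros n _. destruct (Hu n) as [Hs Hlt].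
        destruct (S2_mem _ Hs) as [E|[j E]]; [lra|]. exists j. split; auto; lra.
      * destruct (Hu N); lra.
    + destruct (Hcv (A - 1/2) ltac:(lra)) as [N HN].
      pose proof (HN N ltac:(lia)). destruct (Hu N) as [Hs _]. pose proof (S2_le _ Hs).
      unfold Rdist, Rabs in H; destruct Rcase_abs; lra.
  - intros ->. exists (fun n => fj (S n)). split.
    + intros k. split; [apply S2_fj; lia|].
      unfold fj. pose proof (pos_INR (S k)).
      apply (Rmult_lt_reg_r (2 * INR (S k) + 1)); [lra|]. field_simplify; lra.
    + intros eps Heps. destruct (archimed_cor1 eps Heps) as [N [HN HN0]].
      exists N. intros n Hn. unfold Rdist, fj.
      assert (HNn : INR N <= INR (S n)) by (apply le_INR; lia).
      assert (0 < INR N) by (apply lt_0_INR; lia).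
      set (x := INR (S n)) in *.
      replace (x / (2 * x + 1) - 1/2) with (- (1 / (2 * (2*x+1)))) by (field; lra).
      rewrite Rabs_Ropp, Rabs_pos_eq.
      * apply Rle_lt_trans with (/ INR N); auto.
        unfold Rdiv. rewrite Rmult_1_l. apply Rinv_le_contravar; lra.
      * unfold Rdiv; rewrite Rmult_1_l; left; apply Rinv_0_lt_compat; lra.
Qed.

Lemma no_upper A : ~ upper_acc 2 A.
Proof.
  intros [u [Hu Hcv]].
  destruct (Rlt_le_dec A (1/2)) as [Hl|Hg].
  - set (B := (A + 1/2)/2).
    destruct (Hcv (B - A) ltac:(unfold B; lra)) as [N0 HN0].
    destruct (discrete u A B N0 Hcv ltac:(unfold B; lra)) as [N HN].
    + intros n Hn. pose proof (HN0 n Hn). destruct (Hu n) as [Hs Hgt].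
      unfold Rdist, Rabs in H; destruct Rcase_abs; [lra|].
      destruct (S2_mem _ Hs) as [E|[j E]]; [unfold B in *; lra|]. exists j. split; auto; lra.
    + destruct (Hu N); lra.
  - destruct (Hu 0%nat) as [Hs Hgt]. pose proof (S2_le _ Hs). lra.
Qed.

Theorem theorem9p3 :
  (forall x : R, S_set 1 x <-> x = 1 / 2) /\
  (forall A : R, lower_acc 2 A <-> S_set 1 A) /\
  (forall A : R, ~ upper_acc 2 A).
Proof.
  split; [exact S1_iff|]. split.
  - intros A. rewrite S1_iff. apply lower_iff.
  - exact no_upper.
Qed.
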